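(* Let $\mathcal{X}\subseteq\mathbb{R}^d$ be a nonempty closed convex set and consider the iterates $x_t,z_t$ and step sizes $\gamma_t$ of Algorithm AdaPEG (described in the context), run with arbitrary oracle answers $\widehat{F(x_t)}\in\mathbb{R}^d$. Then for every $t\ge1$, \[\langle\widehat{F(x_t)}-\widehat{F(x_{t-1})},x_t-z_t\rangle\le\frac1{\gamma_t}\left\|\widehat{F(x_t)}-\widehat{F(x_{t-1})}\right\|^2.\]
   Context: $\|\cdot\|$ is the Euclidean norm. Algorithm AdaPEG: $x_0=z_0\in\mathcal{X}$, $\gamma_0\ge0$, $\eta>0$. For $t=1,\dots,T$: $x_t=\arg\min_{u\in\mathcal{X}}\{\langle\widehat{F(x_{t-1})},u\rangle+\tfrac12\gamma_{t-1}\|u-z_{t-1}\|^2\}$; $\gamma_t=\frac1\eta\sqrt{\eta^2\gamma_0^2+\sum_{s=1}^t\|\widehat{F(x_s)}-\widehat{F(x_{s-1})}\|^2}$; $z_t=\arg\min_{u\in\mathcal{X}}\{\langle\widehat{F(x_t)},u\rangle+\tfrac12\gamma_{t-1}\|u-z_{t-1}\|^2+\tfrac12(\gamma_t-\gamma_{t-1})\|u-x_t\|^2\}$. *)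

(* Defs.v *)
From HB Require Import structures.
From mathcomp Require Import all_boot all_order all_algebra.
From mathcomp Require Import all_classical all_reals all_analysis.
Set Implicit Arguments. Unset Strict Implicit. Unset Printing Implicit Defensive.
Import Order.TTheory GRing.Theory Num.Theory.
Import numFieldNormedType.Exports.
Local Open Scope classical_set_scope.
Local Open Scope ring_scope.

Definition dotp {R : realType} {d : nat} (u v : 'rV[R]_d) : R :=
  \sum_(i < d) u ord0 i * v ord0 i.

Definition enorm {R : realType} {d : nat} (u : 'rV[R]_d) : R :=
  Num.sqrt (dotp u u).

Definition convex_set_Rd {R : realType} {d : nat} (X : set 'rV[R]_d) : Prop :=
  forall x y : 'rV[R]_d, X x -> X y -> forall l : R, 0 <= l -> l <= 1 ->
    X (l *: x + (1 - l) *: y).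

Definition is_argmin {R : realType} {d : nat} (X : set 'rV[R]_d)
  (f : 'rV[R]_d -> R) (u : 'rV[R]_d) : Prop :=
  X u /\ forall v, X v -> f u <= f v.

(* The AdaPEG recursion, with oracle answers g t = \widehat{F(x_t)}. *)
Definition AdaPEG {R : realType} {d : nat} (X : set 'rV[R]_d)
  (gamma0 eta : R) (g : nat -> 'rV[R]_d)
  (x z : nat -> 'rV[R]_d) (gamma : nat -> R) : Prop :=
  [/\ x 0%N = z 0%N /\ X (x 0%N), gamma 0%N = gamma0,
      (forall t : nat, (1 <= t)%N ->
         is_argmin X (fun u => dotp (g t.-1) u
                        + 2^-1 * gamma t.-1 * enorm (u - z t.-1) ^+ 2) (x t)),
      (forall t : nat, (1 <= t)%N ->
         gamma t = eta^-1 * Num.sqrt (eta ^+ 2 * gamma0 ^+ 2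
                     + \sum_(1 <= s < t.+1) enorm (g s - g s.-1) ^+ 2)) &
      (forall t : nat, (1 <= t)%N ->
         is_argmin X (fun u => dotp (g t) u
                        + 2^-1 * gamma t.-1 * enorm (u - z t.-1) ^+ 2
                        + 2^-1 * (gamma t - gamma t.-1) * enorm (u - x t) ^+ 2) (z t))].

(* Main.v *)
Require Import Defs.
From HB Require Import structures.
From mathcomp Require Import all_boot all_order all_algebra.
From mathcomp Require Import all_classical all_reals all_analysis.
From mathcomp Require Import ring lra.
Import Order.TTheory GRing.Theory Num.Theory.
Import numFieldNormedType.Exports.
Local Open Scope classical_set_scope.
Local Open Scope ring_scope.

Section S.
Variables (R : realType) (d : nat).
Implicit Types u v w c : 'rV[R]_d.

Lemma dotpC u v : dotp u v = dotp v u.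
Proof. by apply: eq_bigr => i _; rewrite mulrC. Qed.
Lemma dotpDl u v w : dotp (u + v) w = dotp u w + dotp v w.
Proof. by rewrite /dotp -big_split; apply: eq_bigr => i _; rewrite mxE mulrDl. Qed.
Lemma dotpZl k u v : dotp (k *: u) v = k * dotp u v.
Proof. by rewrite /dotp mulr_sumr; apply: eq_bigr => i _; rewrite mxE mulrA. Qed.
Lemma dotpNl u v : dotp (- u) v = - dotp u v.
Proof. by rewrite -scaleN1r dotpZl mulN1r. Qed.
Lemma dotpBl u v w : dotp (u - v) w = dotp u w - dotp v w.
Proof. by rewrite dotpDl dotpNl. Qed.
Lemma dotpDr u v w : dotp w (u + v) = dotp w u + dotp w v.
Proof. by rewrite dotpC dotpDl !(dotpC w). Qed.
Lemma dotpZr k u v : dotp v (k *: u) = k * dotp v u.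
Proof. by rewrite dotpC dotpZl dotpC. Qed.
Lemma dotpNr u v : dotp v (- u) = - dotp v u.
Proof. by rewrite dotpC dotpNl dotpC. Qed.
Lemma dotp_ge0 u : 0 <= dotp u u.
Proof. by apply: sumr_ge0 => i _; rewrite -expr2 sqr_ge0. Qed.
Lemma enorm_sq u : enorm u ^+ 2 = dotp u u.
Proof. by rewrite /enorm sqr_sqrtr // dotp_ge0. Qed.

Lemma quad_ge0 (A B : R) : 0 <= B ->
  (forall l : R, 0 < l -> l <= 1 -> 0 <= l * A + l ^+ 2 * B) -> 0 <= A.
Proof.
move=> B0 H; rewrite leNgt; apply/negP => A0.
set D := - A + B + 1.
have D0 : 0 < D by rewrite /D; lra.
set l := - A / D.
have lD : l * D = - A by rewrite /l mulfVK // gt_eqF.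
have l0 : 0 < l by rewrite /l divr_gt0 // oppr_gt0.
have l1 : l <= 1 by rewrite /l ler_pdivrMr // mul1r /D; lra.
have := H l l0 l1.
have -> : l * A + l ^+ 2 * B = l * (A + l * B) by rewrite expr2; ring.
rewrite pmulr_rge0 // => h.
have : 0 <= (A + l * B) * D by rewrite mulr_ge0 // ltW.
rewrite mulrDl -mulrA (mulrC B) mulrA lD /D; nra.
Qed.

Lemma vec_comb l u v : l *: v + (1 - l) *: u = u + l *: (v - u).
Proof. by rewrite scalerBl scale1r scalerBr addrC -addrA (addrC (- _)). Qed.

Lemma dotp_expand (p h : 'rV[R]_d) (l : R) : dotp (p + l *: h) (p + l *: h) =
  dotp p p + 2 * l * dotp p h + l ^+ 2 * dotp h h.
Proof.
rewrite !dotpDl !dotpDr !dotpZl !dotpZr (dotpC h p); ring.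
Qed.

Lemma opt (X : set 'rV[R]_d) c w1 w2 u v (a b : R) :
  convex_set_Rd X -> 0 <= a -> 0 <= b -> X v ->
  (forall y, X y -> dotp c u + 2^-1 * a * enorm (u - w1) ^+ 2
                     + 2^-1 * b * enorm (u - w2) ^+ 2 <=
                    dotp c y + 2^-1 * a * enorm (y - w1) ^+ 2
                     + 2^-1 * b * enorm (y - w2) ^+ 2) ->
  X u ->
  0 <= dotp c (v - u) + a * dotp (u - w1) (v - u) + b * dotp (u - w2) (v - u).
Proof.
move=> cX a0 b0 Xv Hmin Xu.
apply: (@quad_ge0 _ (2^-1 * (a + b) * dotp (v - u) (v - u))).
  by rewrite !mulr_ge0 ?dotp_ge0 ?invr_ge0 //; lra.
move=> l l0 l1.
have := Hmin _ (cX _ _ Xv Xu l (ltW l0) l1).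
rewrite vec_comb !enorm_sq.
have E1 : u + l *: (v - u) - w1 = (u - w1) + l *: (v - u) by rewrite addrAC.
have E2 : u + l *: (v - u) - w2 = (u - w2) + l *: (v - u) by rewrite addrAC.
rewrite E1 E2 !dotp_expand (dotpDr u (l *: (v - u)) c) dotpZr.
move=> h; lra.
Qed.
End S.

Theorem lemmaB4 (R : realType) (d : nat) (X : set 'rV[R]_d)
  (gamma0 eta : R) (g : nat -> 'rV[R]_d)
  (x z : nat -> 'rV[R]_d) (gamma : nat -> R) :
  X !=set0 -> closed X -> convex_set_Rd X ->
  0 <= gamma0 -> 0 < eta ->
  AdaPEG X gamma0 eta g x z gamma ->
  forall t : nat, (1 <= t)%N ->
    dotp (g t - g t.-1) (x t - z t) <= (gamma t)^-1 * enorm (g t - g t.-1) ^+ 2.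
Proof.
move=> _ _ cX g00 eta0 [[x0z0 Xx0] gam0 Hx Hgam Hz] t t1.
have gammaE : forall n, gamma n = eta^-1 * Num.sqrt (eta ^+ 2 * gamma0 ^+ 2
                     + \sum_(1 <= s < n.+1) enorm (g s - g s.-1) ^+ 2).
  case=> [|n]; last exact: Hgam.
  rewrite gam0 big_geq // addr0 -exprMn sqrtr_sqr ger0_norm; last by rewrite mulr_ge0 // ltW.
  by rewrite mulKf ?gt_eqF.
have gam_ge0 : forall n, 0 <= gamma n.
  by move=> n; rewrite gammaE mulr_ge0 ?sqrtr_ge0 // invr_ge0 ltW.
have gam_mono : forall n, gamma n <= gamma n.+1.
  move=> n; rewrite !gammaE; apply: ler_wpM2l; first by rewrite invr_ge0 ltW. apply: ler_wsqrtr.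
  by rewrite (big_nat_recr n.+1) //= lerD2l lerDl sqr_ge0.
case: t t1 => // n _ /=.
have [Xx1 Hxmin] := Hx n.+1 isT.
have [Xz1 Hzmin] := Hz n.+1 isT.
rewrite /= in Hxmin Hzmin.
set a := gamma n. set b := gamma n.+1 - gamma n.
have a0 : 0 <= a by exact: gam_ge0.
have b0 : 0 <= b by rewrite subr_ge0.
have H1 := @opt R d X (g n) (z n) (z n) (x n.+1) (z n.+1) a 0 cX a0 (lexx 0) Xz1
   (fun y Xy => ltac:(rewrite !mulr0 !mul0r !addr0; exact: Hxmin y Xy)) Xx1.
have H2 := @opt R d X (g n.+1) (z n) (x n.+1) (z n.+1) (x n.+1) a b cX a0 b0 Xx1
   Hzmin Xz1.
rewrite -(opprB (x n.+1)) !dotpNr in H1 H2.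
set w := x n.+1 - z n.+1 in H1 H2 *.
set del := g n.+1 - g n.
have Hk : (a + b) * dotp w w <= dotp del w.
  have Ew : dotp w w = dotp (x n.+1) w - dotp (z n.+1) w by rewrite dotpBl.
  rewrite /del dotpBl Ew.
  rewrite !dotpBl in H1 H2.
  rewrite dotpNl !dotpBl in H2. lra.
have gE : a + b = gamma n.+1 by rewrite /b addrC subrK.
rewrite gE in Hk.
set G := gamma n.+1 in Hk gE *.
have G0 : 0 <= G by exact: gam_ge0.
rewrite enorm_sq.
have Hq := @dotp_ge0 _ _ (del + (- G) *: w).
rewrite dotp_expand sqrrN in Hq.
have HkG := ler_wpM2l G0 Hk.
have Hm : G * dotp del w <= dotp del del by nra.
have [Gp|] := ltrP 0 G.
  rewrite -[dotp del w](mulKf (lt0r_neq0 Gp)); apply: ler_wpM2l => //; by rewrite invr_ge0.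
move=> GG; have Gz : G = 0 by apply/eqP; rewrite eq_le GG G0.
rewrite Gz invr0 mul0r.
have dd0 : dotp del del = 0.
  apply/eqP; rewrite eq_le dotp_ge0 andbT.
  have := gammaE n.+1; rewrite -/G Gz => /esym/eqP.
  rewrite mulf_eq0 invr_eq0 gt_eqF //= sqrtr_eq0 (big_nat_recr n.+1) //=.
  rewrite -enorm_sq -/del => HS.
  have : 0 <= \sum_(1 <= i < n.+1) enorm (g i - g i.-1) ^+ 2.
    by apply: sumr_ge0 => i _; rewrite sqr_ge0.
  have : 0 <= eta ^+ 2 * gamma0 ^+ 2 by rewrite mulr_ge0 ?sqr_ge0.
  lra.
have : 0 <= - 2 * dotp del w.
  apply: (@quad_ge0 R _ (dotp w w) (@dotp_ge0 _ _ w)) => l l0 l1.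
  have := @dotp_ge0 _ _ (del + (- l) *: w).
  rewrite dotp_expand sqrrN dd0; lra.
lra.
Qed.
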